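(* For every $\sigma\in\mathrm{Aut}(M_7)$, the action of $\sigma$ commutes with the action of $\Lambda_{\{2\},\{3\}}$, i.e. $\Lambda_{\{2\},\{3\}}\circ\sigma=\sigma\circ\Lambda_{\{2\},\{3\}}$ (in particular $\lambda_{\{2\},\{3\}}\circ\sigma=\sigma\circ\lambda_{\{2\},\{3\}}$ as rational self-maps of $\mathcal{R}_7$).
   Context: Over $\mathbb{C}$. For a line arrangement $\mathcal{C}$, $\Lambda_{\{2\},\{3\}}(\mathcal{C})$ is the union of lines containing exactly three double points of $\mathcal{C}$. For a labeled arrangement $\mathcal{C}_0=(\ell_1,\dots,\ell_7)$ let $H_j=\sum_{k\neq j}\ell_k$; the labeled image is $\Lambda_{\{2\},\{3\}}(\mathcal{C}_0)=(\Lambda_{\{2\},\{3\}}(H_1),\dots,\Lambda_{\{2\},\{3\}}(H_7))$. $M_7$ is the rank-3 matroid on $\{1,\dots,7,1',\dots,7'\}$ whose non-bases are the triples $\{a,b,c'\}$ with $a\neq b\in\{1,\dots,7\}$, $a+b\equiv2c\pmod7$; its realizations are labeled 14-line arrangements in which three lines are concurrent iff their labels form a non-basis, and for a realization $\mathcal{C}_0\cup\mathcal{C}_1$ one has $\mathcal{C}_1=\Lambda_{\{2\},\{3\}}(\mathcal{C}_0)$ (labeled). $\mathcal{R}_7$ is the moduli space of realizations up to $\mathrm{PGL}_3$; for generic realizations $\mathcal{C}_1\cup\Lambda_{\{2\},\{3\}}(\mathcal{C}_1)$ is again a realization, and $\lambda_{\{2\},\{3\}}:[\mathcal{C}_0\cup\mathcal{C}_1]\mapsto[\mathcal{C}_1\cup\Lambda_{\{2\},\{3\}}(\mathcal{C}_1)]$.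 $\mathrm{Aut}(M_7)$ is the group of permutations of the ground set preserving bases; each $\sigma$ preserves $\{1,\dots,7\}$ and acts on labeled arrangements (and on $\mathcal{R}_7$) by permuting labels. *)

(* Defs.v *)
From mathcomp Require Import all_boot all_fingroup all_algebra.
From mathcomp Require Import reals complex.
Set Implicit Arguments. Unset Strict Implicit. Unset Printing Implicit Defensive.
Import GRing.Theory Num.Theory.
Local Open Scope ring_scope.

(* ---------- The matroid M_7 ----------
   Ground set {1..7} u {1'..7'} is encoded as 'I_7 + 'I_7:
   label a (1<=a<=7) is  inl (a-1),  label c' is  inr (c-1).
   The condition a+b = 2c (mod 7) is invariant under this shift by 1. *)
Definition M7ground := ('I_7 + 'I_7)%type.

Definition M7nonbasis (B : {set M7ground}) : bool :=
  [exists a : 'I_7, exists b : 'I_7, exists c : 'I_7,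
     [&& a != b, ((a + b) %% 7 == (2 * c) %% 7)%N
       & B == [set inl a; inl b; inr c]]].

Definition M7basis (B : {set M7ground}) : bool :=
  (#|B| == 3)%N && ~~ M7nonbasis B.

Definition isAutM7 (s : {perm M7ground}) : Prop :=
  forall B : {set M7ground}, M7basis (s @: B) = M7basis B.

(* ---------- Projective plane geometry over a field K ----------
   Points and lines of P^2(K) are represented by nonzero row vectors of K^3
   (homogeneous coordinates); a point p lies on a line l iff p . l = 0. *)
Section Geometry.
Variable K : fieldType.

Definition proj_eq (u v : 'rV[K]_3) : Prop :=
  exists c : K, c != 0 /\ u = c *: v.

Definition incident (p l : 'rV[K]_3) : bool :=
  \sum_(i < 3) p 0 i * l 0 i == 0.

Definition arrangement7 (C : 'I_7 -> 'rV[K]_3) : Prop :=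
  (forall i, C i != 0) /\ (forall i j, i != j -> ~ proj_eq (C i) (C j)).

(* H_j = sum_{k <> j} l_k ; number of lines of H_j through p *)
Definition multH (C : 'I_7 -> 'rV[K]_3) (j : 'I_7) (p : 'rV[K]_3) : nat :=
  #|[set k : 'I_7 | (k != j) && incident p (C k)]|.

Definition double_pointH (C : 'I_7 -> 'rV[K]_3) (j : 'I_7) (p : 'rV[K]_3)
  : Prop := p != 0 /\ multH C j p = 2%N.

(* m is a line containing exactly three double points of H_j,
   i.e. m is one of the lines making up Lambda_{{2},{3}}(H_j). *)
Definition LambdaH (C : 'I_7 -> 'rV[K]_3) (j : 'I_7) (m : 'rV[K]_3) : Prop :=
  m != 0 /\
  exists p1 p2 p3 : 'rV[K]_3,
    [/\ double_pointH C j p1 /\ incident p1 m,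
        double_pointH C j p2 /\ incident p2 m,
        double_pointH C j p3 /\ incident p3 m,
        [/\ ~ proj_eq p1 p2, ~ proj_eq p1 p3 & ~ proj_eq p2 p3]
      & forall p, double_pointH C j p -> incident p m ->
          [\/ proj_eq p p1, proj_eq p p2 | proj_eq p p3]].

End Geometry.

(* Main.v *)
Require Import Defs.
From mathcomp Require Import all_boot all_fingroup all_algebra.
Set Implicit Arguments. Unset Strict Implicit. Unset Printing Implicit Defensive.
From Stdlib Require Import FunctionalExtensionality.
From mathcomp Require Import reals complex.

Notation N := M7nonbasis.

Lemma nbP B : N B -> exists a b c : 'I_7,
  [/\ a != b, ((a + b) %% 7 == (2 * c) %% 7)%N & B = [set inl a; inl b; inr c]].
Proof.
case/existsP=> a /existsP [b /existsP [c /and3P [h1 h2 /eqP h3]]].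
by exists a, b, c.
Qed.

Lemma nbI (a b c : 'I_7) : a != b -> ((a + b) %% 7 == (2 * c) %% 7)%N ->
  N [set inl a; inl b; inr c].
Proof.
move=> h1 h2; apply/existsP; exists a; apply/existsP; exists b;
apply/existsP; exists c; by rewrite h1 h2 eqxx.
Qed.

Lemma nb_card B : N B -> #|B| = 3%N.
Proof.
case/nbP=> a [b [c [hab _ ->]]].
rewrite setUC cardsU1 cards2 !inE /=.
have -> : (inl a != inl b :> M7ground) by apply/eqP => -[] /eqP; rewrite (negbTE hab).
by [].

Qed.


Lemma all7 (P : nat -> bool) : all P (iota 0 7) -> forall x : 'I_7, P x.
Proof. by move/allP=> h x; apply: h; rewrite mem_iota ltn_ord. Qed.


Lemma ar1n : all (fun c => all (fun b => ((c + b) %% 7 == (2 * c) %% 7) ==> (c == b)) (iota 0 7)) (iota 0 7).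
Proof. by []. Qed.
Lemma ar1 (c b : 'I_7) : ((c + b) %% 7 == (2 * c) %% 7)%N -> c = b.
Proof. by move=> h; apply/val_inj/eqP; move: (all7 (all7 ar1n c) b) => /implyP; apply. Qed.

Lemma ar2n : all (fun c => all (fun e => has (fun h => (c + e) %% 7 == (2 * h) %% 7) (iota 0 7)) (iota 0 7)) (iota 0 7).
Proof. by []. Qed.
Lemma ar2 (c e : 'I_7) : exists h : 'I_7, ((c + e) %% 7 == (2 * h) %% 7)%N.
Proof.
move: (all7 (all7 ar2n c) e) => /hasP [h]; rewrite mem_iota /= => hh he.
by exists (Ordinal hh).
Qed.

Lemma ar3n : all (fun c => all (fun e => (c != e) ==> has (fun b => (b != c) && ((c + b) %% 7 == (2 * e) %% 7)) (iota 0 7)) (iota 0 7)) (iota 0 7).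
Proof. by []. Qed.
Lemma ar3 (c e : 'I_7) : c != e -> exists b : 'I_7, (b != c) && ((c + b) %% 7 == (2 * e) %% 7)%N.
Proof.
move=> hce; move: (all7 (all7 ar3n c) e) => /implyP /(_ hce) /hasP [b]; rewrite mem_iota /= => hb he.
by exists (Ordinal hb).
Qed.

Lemma inlE (x y : 'I_7) : (inl x == inl y :> M7ground) = (x == y).
Proof. by apply/eqP/eqP => [[]|->]. Qed.
Lemma inrE (x y : 'I_7) : (inr x == inr y :> M7ground) = (x == y).
Proof. by apply/eqP/eqP => [[]|->]. Qed.
Lemma inlrE (x y : 'I_7) : (inl x == inr y :> M7ground) = false.
Proof. by apply/eqP. Qed.
Lemma inrlE (x y : 'I_7) : (inr x == inl y :> M7ground) = false.
Proof. by apply/eqP. Qed.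
Definition sumE := (inlE, inrE, inlrE, inrlE).

Lemma F3 B (c : 'I_7) : N B -> inl c \in B -> inr c \in B -> False.
Proof.
case/nbP=> a [b [e [hab hc ->]]]; rewrite !inE !sumE /= orbF => h1 /eqP ?; subst e.
case/orP: h1 => /eqP ?; subst c.
  by move: (ar1 hc) => ?; subst b; rewrite eqxx in hab.
by rewrite addnC in hc; move: (ar1 hc) => ?; subst b; rewrite eqxx in hab.
Qed.

Lemma F2 (c d : 'I_7) z : N [set inr c; inr d; z] -> False.
Proof.
case/nbP=> a [b [e [hab _ E]]].
have ha : inl a \in [set inr c; inr d; z] by rewrite E !inE eqxx.
have hb : inl b \in [set inr c; inr d; z] by rewrite E !inE eqxx orbT.
move: ha hb; rewrite !inE !sumE /= => /eqP <- /eqP [] ?; subst b.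
by rewrite eqxx in hab.
Qed.

Lemma F14 (c : 'I_7) y : y != inl c -> y != inr c -> exists z, N [set inl c; y; z].
Proof.
case: y => [e|e]; rewrite !sumE // => h1 h2.
  have [h hh] := ar2 c e; exists (inr h); apply: nbI => //; by rewrite eq_sym.
have hce : c != e by rewrite eq_sym.
have [b /andP [hb hh]] := ar3 hce.
exists (inl b).
have -> : [set inl c; inr e; inl b] = [set inl c; inl b; inr e] :> {set M7ground}.
  by apply/setP=> x; rewrite !inE; case: (x == inl c); case: (x == inr e); case: (x == inl b).
by apply: nbI => //; rewrite eq_sym.
Qed.

Section Aut.
Variable s : {perm M7ground}.
Hypothesis NS : forall B : {set M7ground}, N (s @: B) = N B.

Lemma NSt x y z : N [set s x; s y; s z] = N [set x; y; z].
Proof.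
have -> : [set s x; s y; s z] = s @: [set x; y; z] by rewrite imsetU imsetU1 !imset_set1.
exact: NS.
Qed.

Lemma NS_back x y z : N [set s x; s y; z] -> N [set x; y; (s^-1)%g z].
Proof. by rewrite -(NSt x y) permKV. Qed.

Lemma factA a : exists b, s (inl a) = inl b.
Proof.
case E: (s (inl a)) => [b|c]; first by exists b.
exfalso.
have st : s ((s^-1)%g (inl c)) = inl c by rewrite permKV.
case Et: ((s^-1)%g (inl c)) st => [b|d] st.
  have bna : inl b != inl a :> M7ground.
    by apply/eqP => hb; rewrite hb E in st.
  have bnr : inl b != inr a :> M7ground by rewrite sumE.
  have [z hz] := F14 bna bnr.
  have := hz; rewrite -NSt E st => hz'.
  by apply: (F3 (c := c) hz'); rewrite !inE eqxx ?orbT.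
set d' := lift d ord0.
have hd : d != d' := neq_lift d ord0.
have y1 : s (inr d') != inl c.
  by rewrite -st (inj_eq (@perm_inj _ s)) inrE eq_sym.
have y2 : s (inr d') != inr c.
  by rewrite -E (inj_eq (@perm_inj _ s)) inrlE.
have [z hz] := F14 y1 y2.
move: hz; rewrite -{1}st => /NS_back; exact: F2.
Qed.

End Aut.

Lemma NS_of (s : {perm M7ground}) : isAutM7 s -> forall B : {set M7ground}, N (s @: B) = N B.
Proof.
move=> hs B; have := hs B; rewrite /M7basis (card_imset _ (@perm_inj _ s)).
case: (boolP (#|B| == 3)) => h3 /=; first by move/negb_inj.
move=> _; apply/idP/idP => /nb_card h.
  by move: h; rewrite (card_imset _ (@perm_inj _ s)) => h; rewrite h in h3.
by rewrite h in h3.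
Qed.

Lemma NS_inv (s : {perm M7ground}) : (forall B : {set M7ground}, N (s @: B) = N B) ->
  forall B : {set M7ground}, N ((s^-1)%g @: B) = N B.
Proof.
move=> NS B; rewrite -NS.
have -> : s @: ((s^-1)%g @: B) = B.
  by rewrite -imset_comp (eq_imset _ (permKV s)) imset_id.
by [].
Qed.

Lemma key (s : {perm M7ground}) : isAutM7 s -> exists f : 'I_7 -> 'I_7,
  forall k, s (inl k) = inl (f k) /\ s (inr k) = inr (f k).
Proof.
move=> /NS_of NS.
pose f k := if s (inl k) is inl b then b else k.
exists f => k.
have hl : s (inl k) = inl (f k).
  by rewrite /f; have [b ->] := factA NS k.
split => //.
case E: (s (inr k)) => [b|d].
  have [b' hb'] := factA (NS_inv NS) b.
  by move: hb'; rewrite -E permK.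
congr inr; apply/eqP; apply: contraT => hne.
have h1 : inr d != inl (f k) :> M7ground by rewrite sumE.
have h2 : inr d != inr (f k) :> M7ground by rewrite sumE.
have [z hz] := F14 h1 h2.
move: hz; rewrite -hl -E => /(NS_back NS) hz.
have [] : False by apply: (F3 (c := k) hz); rewrite !inE eqxx ?orbT.
Qed.

Lemma multH_f (K : fieldType) (f : 'I_7 -> 'I_7) (injf : injective f)
  (C D : 'I_7 -> 'rV[K]_3) :
  (forall k, D (f k) = C k) -> forall a p, multH D (f a) p = multH C a p.
Proof.
move=> hDC a p; rewrite /multH -!sum1_card (reindex_inj injf) /=.
by apply: eq_bigl => k; rewrite !inE (inj_eq injf) hDC.
Qed.

Lemma LambdaH_ext (K : fieldType) (C C' : 'I_7 -> 'rV[K]_3) j j' :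
  (forall p, multH C j p = multH C' j' p) ->
  forall m, LambdaH C j m <-> LambdaH C' j' m.
Proof.
move=> h m.
have E : multH C j = multH C' j' := functional_extensionality _ _ h.
by rewrite /LambdaH /double_pointH E.
Qed.

Local Open Scope ring_scope.

Theorem proposition3p6 (R : realType) (s : {perm M7ground}) :
  isAutM7 s ->
  (forall (C0 D : 'I_7 -> 'rV[R[i]]_3),
     arrangement7 C0 ->
     (forall a b : 'I_7, s (inl a) = inl b -> D b = C0 a) ->
     forall a b : 'I_7, s (inr a) = inr b ->
       forall m : 'rV[R[i]]_3, LambdaH D b m <-> LambdaH C0 a m)
  /\
  (forall (C1 D1 : 'I_7 -> 'rV[R[i]]_3),
     arrangement7 C1 ->
     (forall a b : 'I_7, s (inr a) = inr b -> D1 b = C1 a) ->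
     forall a b : 'I_7, s (inl a) = inl b ->
       forall m : 'rV[R[i]]_3, LambdaH D1 b m <-> LambdaH C1 a m).
Proof.
move=> hs; have [f hf] := key hs.
have injf : injective f.
  by move=> x y e; have := (hf x).1; rewrite e -(hf y).1 => /perm_inj [].
split.
- move=> C0 D _ hD a b hab m.
  have fab : f a = b by move: hab; rewrite (hf a).2 => -[].
  rewrite -fab; apply: LambdaH_ext => p; apply: multH_f => // k.
  exact: hD (hf k).1.
- move=> C1 D1 _ hD a b hab m.
  have fab : f a = b by move: hab; rewrite (hf a).1 => -[].
  rewrite -fab; apply: LambdaH_ext => p; apply: multH_f => // k.
  exact: hD (hf k).2.
Qed.
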